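(* Let $G$ be a connected planar trivalent graph with a perfect matching $M$. If $G$ contains a bridge, then $\langle G:M\rangle_2(1)=0$ and $|G:M|_2=0$.
   Context: Graphs are finite and may have multiple edges; trivalent means every vertex has degree $3$. A bridge is an edge whose removal disconnects the graph. $|G:M|_2$ denotes the number of $2$-factors (spanning subgraphs in which every vertex has degree $2$) of $G$ containing every edge of $M$. The $2$-factor polynomial $\langle G:M\rangle_2(z)\in\mathbb{Z}[z,z^{-1}]$ is defined as follows. Embed $G$ in the $2$-sphere. For a matching edge $e=uv$, let $\alpha,\beta$ be the other two edge-ends at $u$ and $\gamma,\delta$ the other two at $v$, labelled so that in a small disk around $e$ they appear in cyclic order $\alpha,\beta,\delta,\gamma$. The $0$-resolution at $e$ deletes $e,u,v$ and joins $\alpha$ to $\gamma$ and $\beta$ to $\delta$ by disjoint arcs; the $1$-resolution joins $\alpha$ to $\delta$ and $\beta$ to $\gamma$ by two arcs crossing once. For a state $s:M\to\{0,1\}$, resolving every matching edge accordingly yields $c(s)$ immersed closed curves, and $\langle G:M\rangle_2(z)=\sum_s(-z)^{|s|}(z+z^{-1})^{c(s)}$, where $|s|$ is the number of edges assigned $1$. This is independent of the chosen embedding. *)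

(* Defs.v *)
From mathcomp Require Import all_boot all_order all_algebra all_fingroup.
Set Implicit Arguments. Unset Strict Implicit. Unset Printing Implicit Defensive.
Import GRing.Theory.
Local Open Scope ring_scope.

Section TwoFactor.
Variables (V D : finType) (vert : D -> V) (alpha : D -> D).

(* A (multi)graph with vertex set V and dart set D: [alpha] pairs the two
   darts (ends) of each edge, [vert d] is the vertex at which dart d lies.
   Edges are the pairs {d, alpha d}; loops are allowed. *)
Definition dart_graph : Prop := involutive alpha /\ forall d, alpha d != d.

(* every vertex has degree 3 (a loop contributes 2) *)
Definition trivalent : Prop := forall v, #|[set d | vert d == v]| = 3%N.

Definition adj : rel V :=
  fun u w => [exists d, (vert d == u) && (vert (alpha d) == w)].

Definition connected_graph : Prop := forall u w, connect adj u w.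

Definition adj_minus (d0 : D) : rel V :=
  fun u w => [exists d, [&& d != d0, d != alpha d0, vert d == u & vert (alpha d) == w]].

Definition is_bridge (d0 : D) : Prop := ~ (forall u w, connect (adj_minus d0) u w).

(* a set of darts closed under alpha = a set of edges *)
Definition edge_set (F : {set D}) : bool := [forall d, (d \in F) == (alpha d \in F)].

Definition perfect_matching (M : {set D}) : Prop :=
  edge_set M /\ forall v, #|[set d in M | vert d == v]| = 1%N.

Definition two_factor (F : {set D}) : bool :=
  edge_set F && [forall v, #|[set d in F | vert d == v]| == 2%N].

Definition num_2factors (M : {set D}) : nat :=
  #|[set F : {set D} | two_factor F && (M \subset F)]|.

(* Embedding in the sphere, as a rotation system: [rot] cyclically permutes
   the darts at each vertex; the faces are the orbits of d |-> rot (alpha d);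
   genus 0 (for a connected graph) is Euler's formula V - E + F = 2. *)
Definition rotation_system (rot : {perm D}) : Prop :=
  (forall d, vert (rot d) = vert d) /\
  (forall d e, vert d = vert e -> fconnect rot d e).

Definition face_perm (rot : {perm D}) (d : D) : D := rot (alpha d).

Definition spherical_embedding (rot : {perm D}) : Prop :=
  rotation_system rot /\
  (#|V| + fcard (face_perm rot) D = #|D| %/ 2 + 2)%N.

Variables (rot : {perm D}) (M : {set D}).

(* A state is given by the set S of darts of the matching edges assigned 1. *)
Definition is_state (S : {set D}) : bool := (S \subset M) && edge_set S.

(* Resolution pairing on the darts of non-matching edges.  For a matching edge
   with dart m at u and m' = alpha m at v, the other ends at u are rot m and
   rot^2 m, at v are rot m' and rot^2 m'; in the disk around the edge they
   appear in cyclic order rot m, rot^2 m, rot m', rot^2 m' (= alpha, beta,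
   delta, gamma).  The 0-resolution pairs rot m with rot^2 m' and rot^2 m with
   rot m'; the 1-resolution pairs rot m with rot m' and rot^2 m with rot^2 m'. *)
Definition res (S : {set D}) (d : D) : D :=
  if rot d \in M then
    (* d = rot^2 m with m = rot d *)
    let m' := alpha (rot d) in
    if rot d \in S then rot (rot m') else rot m'
  else
    (* d = rot m with m = rot^-1 d *)
    let m := (rot^-1)%g d in
    let m' := alpha m in
    if m \in S then rot m' else rot (rot m').

(* curves: components of the darts of non-matching edges under the edge
   pairing alpha and the resolution pairing *)
Definition curve_rel (S : {set D}) : rel D :=
  fun d e => [&& d \notin M, e \notin M &
                 [|| e == alpha d, e == res S d | d == res S e]].

Definition num_curves (S : {set D}) : nat :=
  n_comp (curve_rel S) [pred d | d \notin M].

Definition two_factor_poly (R : fieldType) (z : R) : R :=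
  \sum_(S : {set D} | is_state S)
     (- z) ^+ (#|S| %/ 2) * (z + z^-1) ^+ num_curves S.

End TwoFactor.

(* Main.v *)
Require Import Defs.
From mathcomp Require Import all_boot all_order all_algebra all_fingroup.
Set Implicit Arguments. Unset Strict Implicit. Unset Printing Implicit Defensive.

Section P.
Variables (V D : finType) (vert : D -> V) (alpha : D -> D) (rot : {perm D}) (M : {set D}).
Hypothesis alphaK : involutive alpha.
Hypothesis alpha_neq : forall d, alpha d != d.
Hypothesis tri : trivalent vert.
Hypothesis rot_vert : forall d, vert (rot d) = vert d.
Hypothesis rot_conn : forall d e, vert d = vert e -> fconnect rot d e.
Hypothesis PMe : edge_set alpha M.
Hypothesis PM1 : forall v, #|[set d in M | vert d == v]| = 1%N.

Lemma orbit3 d : fingraph.orbit rot d = [:: d; rot d; rot (rot d)].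
Proof.
rewrite /fingraph.orbit.
have -> : fingraph.order rot d = 3%N.
  rewrite /fingraph.order -(tri (vert d)); apply: eq_card => e.
  rewrite inE; apply/idP/eqP => [H|H]; last by apply: rot_conn.
  symmetry; apply: (fconnect_invariant (k := vert)) H => x.
  by rewrite /= rot_vert eqxx.
by [].
Qed.

Lemma rot3 d : rot (rot (rot d)) = d.
Proof.
have := iter_order (@perm_inj _ rot) d.
have : fingraph.order rot d = 3%N by rewrite -size_orbit orbit3.
by move=> ->.
Qed.

Lemma rot_neq d : (rot d != d) && (rot (rot d) != d).
Proof.
have := orbit_uniq rot d; rewrite orbit3 /= !inE !negb_or.
by case/andP=> /andP[a b] /andP[c _]; rewrite eq_sym a eq_sym b.
Qed.

Lemma rot_same d e : vert d = vert e -> [\/ e = d, e = rot d | e = rot (rot d)].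
Proof.
move/rot_conn; rewrite fconnect_orbit orbit3 !inE.
by case/orP=> [/eqP->|/orP[/eqP->|/eqP->]]; [constructor 1|constructor 2|constructor 3].
Qed.

Lemma rotV d : (rot^-1)%g d = rot (rot d).
Proof. by rewrite -{1}(rot3 d) permK. Qed.

Lemma M_uniq m1 m2 : m1 \in M -> m2 \in M -> vert m1 = vert m2 -> m1 = m2.
Proof.
move=> h1 h2 hv.
have /eqP/cards1P [x Hx] := PM1 (vert m1).
have : m1 \in [set d in M | vert d == vert m1] by rewrite inE h1 eqxx.
have : m2 \in [set d in M | vert d == vert m1] by rewrite inE h2 hv eqxx.
by rewrite Hx !inE => /eqP -> /eqP ->.
Qed.

Lemma edgeP (S : {set D}) d : edge_set alpha S -> (alpha d \in S) = (d \in S).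
Proof. by move/forallP/(_ d)/eqP. Qed.

Lemma M_exists v : exists m, (m \in M) && (vert m == v).
Proof.
have /eqP/cards1P [x Hx] := PM1 v.
have : x \in [set d in M | vert d == v] by rewrite Hx set11.
by rewrite inE; exists x.
Qed.

Lemma rotM m : m \in M -> (rot m \notin M) && (rot (rot m) \notin M).
Proof.
move=> hm; have /andP[h1 h2] := rot_neq m.
apply/andP; split; apply/negP => h.
  by move: h1; rewrite (M_uniq h hm) ?eqxx // rot_vert.
by move: h2; rewrite (M_uniq h hm) ?eqxx // !rot_vert.
Qed.

Definition mx x := if rot x \in M then rot x else (rot^-1)%g x.

Lemma mx_M x : x \notin M -> mx x \in M.
Proof.
move=> hx; rewrite /mx; case: ifP => // hr.
have [m /andP[hm /eqP hv]] := M_exists (vert x).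
rewrite rotV; case: (rot_same (esym hv)) => e; subst m.
- by rewrite hm in hx.
- by rewrite hm in hr.
- by [].
Qed.

Lemma mx_vert x : vert (mx x) = vert x.
Proof. by rewrite /mx; case: ifP; rewrite ?rotV !rot_vert. Qed.

Notation res := (res alpha rot M).

Lemma res_dep (S S' : {set D}) x : (mx x \in S) = (mx x \in S') -> res S x = res S' x.
Proof. by rewrite /Defs.res /mx /=; case: ifP => _ ->. Qed.

Lemma res_shape (S : {set D}) x : res S x = rot (alpha (mx x)) \/ res S x = rot (rot (alpha (mx x))).
Proof. by rewrite /Defs.res /mx /=; case: ifP => _; case: ifP => _; auto. Qed.

Lemma res_vert (S : {set D}) x : vert (res S x) = vert (alpha (mx x)).
Proof. by case: (res_shape S x) => ->; rewrite !rot_vert. Qed.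

Lemma res_notM (S : {set D}) x : x \notin M -> res S x \notin M.
Proof.
move=> hx; have hm : alpha (mx x) \in M by rewrite edgeP // mx_M.
by have /andP[h1 h2] := rotM hm; case: (res_shape S x) => ->.
Qed.

Lemma res_at2 (S : {set D}) m : m \in M -> res S (rot (rot m)) = if m \in S then rot (rot (alpha m)) else rot (alpha m).
Proof. by move=> hm; rewrite /Defs.res /= rot3 hm. Qed.

Lemma res_at1 (S : {set D}) m : m \in M -> res S (rot m) = if m \in S then rot (alpha m) else rot (rot (alpha m)).
Proof.
move=> hm; have /andP[_ h2] := rotM hm.
by rewrite /Defs.res /= (negbTE h2) permK.
Qed.

Lemma res_inv (S : {set D}) x : edge_set alpha S -> x \notin M -> res S (res S x) = x.
Proof.
move=> hS hx; have hmx := mx_M hx; move: hmx.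
rewrite {2}/Defs.res /mx /=; case: ifP => hr hm.
  have am : alpha (rot x) \in M by rewrite edgeP.
  case: ifP => hs.
    by rewrite res_at2 // edgeP // hs alphaK rot3.
  by rewrite res_at1 // edgeP // hs alphaK rot3.
have am : alpha ((rot^-1)%g x) \in M by rewrite edgeP.
case: ifP => hs.
  by rewrite res_at1 // edgeP // hs alphaK permKV.
by rewrite res_at2 // edgeP // hs alphaK permKV.
Qed.

Lemma res_neq (S : {set D}) x : x \notin M -> res S x != x.
Proof.
move=> hx; apply/eqP => h.
have := res_vert S x; rewrite h -{1}(mx_vert x) => hv.
have hm := mx_M hx.
have ham : alpha (mx x) \in M by rewrite edgeP.
by have := alpha_neq (mx x); rewrite -(M_uniq hm ham hv) eqxx.
Qed.

Lemma curve_sym (S : {set D}) : symmetric (curve_rel alpha rot M S).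
Proof.
have E : forall a b, (b == alpha a) = (a == alpha b).
  by move=> a b; apply/eqP/eqP => ->; rewrite alphaK.
move=> a b; rewrite /curve_rel E.
by case: (a \in M); case: (b \in M); case: (a == alpha b); case: (b == res S a); case: (a == res S b).
Qed.


Lemma inv_even (X : {set D}) (f : D -> D) :
  {in X, forall z, f z \in X} -> {in X, forall z, f z != z} ->
  {in X, forall z, f (f z) = z} -> ~~ odd #|X|.
Proof.
move=> fX fn ff.
pose Y := [set z in X | (enum_rank z < enum_rank (f z))%N].
have XE : X = Y :|: f @: Y.
  apply/setP => z; rewrite !inE; apply/idP/idP.
    move=> zX; rewrite zX /=.
    case: (ltngtP (enum_rank z) (enum_rank (f z))) => h //=.
      apply/imsetP; exists (f z); last by rewrite ff.
      by rewrite inE fX //= ff.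
    have : enum_rank z = enum_rank (f z) by apply: val_inj.
    by move/enum_rank_inj => e; have := fn z zX; rewrite -e eqxx.
  case/orP => [/andP[] //|/imsetP [w]]; rewrite inE => /andP[wX _] ->.
  exact: fX.
have inj : {in Y &, injective f}.
  move=> a b; rewrite !inE => /andP[aX _] /andP[bX _] e.
  by rewrite -(ff a aX) -(ff b bX) e.
have I0 : Y :&: f @: Y = set0.
  apply/setP => z; rewrite !inE; apply/negP => /andP[/andP[zX h] /imsetP [w]].
  rewrite inE => /andP[wX h2] ez; move: h; rewrite ez ff // => h.
  by have := ltn_trans h h2; rewrite ltnn.
have := cardsUI Y (f @: Y); rewrite -XE I0 cards0 addn0 card_in_imset // => ->.
by rewrite addnn odd_double.
Qed.

Lemma connect_fwd (T : finType) (e : rel T) (P : pred T) :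
  (forall a b, e a b -> P a -> P b) -> forall x y, connect e x y -> P x -> P y.
Proof.
move=> H x y /connectP [p pth ->]; elim: p x pth => //= z p IH x /andP[exz pth] Px.
exact: IH pth (H _ _ exz Px).
Qed.

Lemma key (A : {set V}) m0 (S : {set D}) : m0 \in M -> vert m0 \in A -> vert (alpha m0) \notin A ->
  (forall d, d != m0 -> vert d \in A -> vert (alpha d) \in A) -> edge_set alpha S ->
  forall x y, x \notin M -> y \notin M -> vert x = vert m0 -> vert y = vert m0 ->
  connect (curve_rel alpha rot M S) x y.
Proof.
move=> hm0 hA hnA hcl hS x y hx hy vx vy.
case: (eqVneq x y) => [-> | nxy]; first exact: connect0.
apply/idPn => Hn.
pose U := [set z | (z \notin M) && (vert z \in A)].
pose r := [rel a b | [&& curve_rel alpha rot M S a b, a \in U & b \in U]].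
pose K := [set z | connect r x z].
have xU : x \in U by rewrite inE hx vx hA.
have KU : {subset K <= U}.
  move=> z; rewrite inE => /connect_fwd; apply => // a b /and3P[].
  by [].
have yK : y \notin K.
  apply/negP; rewrite inE => H; apply/negP: Hn; rewrite negbK.
  apply: (connect_sub _ H) => a b /and3P[h _ _]; exact: connect1.
have Kstep : forall z w, z \in K -> r z w -> w \in K.
  by move=> z w; rewrite [z \in K]inE [w \in K]inE => h1 h2; exact: (connect_trans h1 (@connect1 _ r z w h2)).
have xK : x \in K by rewrite inE connect0.
have P3 : forall w, w \notin M -> vert w = vert m0 -> w = rot m0 \/ w = rot (rot m0).
  move=> w hw vw; case: (rot_same (esym vw)) => e; [|by left|by right].
  by rewrite e hm0 in hw.
have PH : forall w, w \notin M -> vert w = vert m0 -> w = x \/ w = y.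
  move=> w hw vw.
  case: (P3 _ hw vw) => ->; case: (P3 _ hx vx) => ex; case: (P3 _ hy vy) => ey;
  subst x y; by [left|right|rewrite eqxx in nxy].
have E1 : ~~ odd #|K|.
  apply: (inv_even (f := alpha)).
  - move=> z zK; have hU := KU _ zK; rewrite inE in hU; case/andP: hU => zM zA; apply: (Kstep _ _ zK).
    rewrite /= !inE /curve_rel (negbTE zM) edgeP // (negbTE zM) eqxx /= zA /=.
    apply: hcl zA; apply/eqP => e; by rewrite e hm0 in zM.
  - by move=> z _; exact: alpha_neq.
  - by move=> z _; rewrite alphaK.
have E2 : ~~ odd #|K :\ x|.
  apply: (inv_even (f := res S)); move=> z /setD1P [zx zK]; have hU := KU _ zK;
    rewrite inE in hU; case/andP: hU => zM zA; last by rewrite res_inv.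
    have zy : z != y by apply/eqP => e; rewrite -e zK in yK.
    have vz : vert z != vert m0.
      by apply/eqP => e; case: (PH _ zM e) => e2; [rewrite e2 eqxx in zx|rewrite e2 eqxx in zy].
    have mzM := mx_M zM.
    have hmz : mx z != m0 by apply/eqP => e; rewrite -e mx_vert eqxx in vz.
    have rA : vert (res S z) \in A by rewrite res_vert; apply: hcl hmz _; rewrite mx_vert.
    have rM := res_notM S zM.
    apply/setD1P; split; last first.
      apply: (Kstep _ _ zK); rewrite /= !inE /curve_rel (negbTE zM) (negbTE rM) zA rA eqxx orbT.
      by [].
    apply/eqP => e.
    have ez : res S x = z by rewrite -e res_inv.
    have mxx : mx x = m0 by apply: M_uniq; rewrite ?mx_M // mx_vert.
    by move: zA; rewrite -ez res_vert mxx (negbTE hnA).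
  exact: res_neq.
by move: E1; rewrite (cardsD1 x K) xK /= (negbTE E2).
Qed.


Lemma card_deg (F : {set D}) (A : {set V}) k :
  (forall v, #|[set d in F | vert d == v]| = k) ->
  #|[set d in F | vert d \in A]| = (k * #|A|)%N.
Proof.
move=> hk; rewrite -sum1_card (partition_big vert (mem A)) /=; last first.
  by move=> d; rewrite inE => /andP[].
rewrite mulnC -sum_nat_const; apply: eq_bigr => v vA.
rewrite -(hk v) -sum1_card; apply: eq_bigl => d; rewrite !inE.
by case: (d \in F) => //=; case: eqP => [->|]; rewrite ?vA ?andbF.
Qed.

Section Cut.
Variables (A0 : {set V}) (c0 : D).
Hypothesis c0A : vert c0 \in A0.
Hypothesis c0nA : vert (alpha c0) \notin A0.
Hypothesis hcl : forall d, d != c0 -> vert d \in A0 -> vert (alpha d) \in A0.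

Lemma parity (F : {set D}) : edge_set alpha F ->
  odd #|[set d in F | vert d \in A0]| = (c0 \in F).
Proof.
move=> hF; rewrite (cardsD1 c0) inE c0A andbT oddD oddb.
suff -> : odd #|[set d in F | vert d \in A0] :\ c0| = false by rewrite addbF.
apply/negbTE; apply: (inv_even (f := alpha)); move=> z /setD1P [zc]; rewrite inE => /andP[zF zA].
- apply/setD1P; split.
    by apply/eqP => e; move: c0nA; rewrite -e alphaK zA.
  by rewrite inE edgeP // zF hcl.
- exact: alpha_neq.
- by rewrite alphaK.
Qed.

Hypothesis c0M : c0 \in M.
Let E := [set c0; alpha c0].

Lemma good (S : {set D}) m : edge_set alpha S -> m \in E ->
  forall x y, x \notin M -> y \notin M -> vert x = vert m -> vert y = vert m ->
  connect (curve_rel alpha rot M S) x y.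
Proof.
move=> hS; case/set2P => ->.
  exact: (key c0M c0A c0nA hcl hS).
apply: (key (A := ~: A0)) => //.
- by rewrite edgeP.
- by rewrite inE.
- by rewrite alphaK inE negbK.
move=> d dn; rewrite !inE => dA; apply/negP => h; move: dA; rewrite -{1}(alphaK d) hcl //.
by apply/eqP => e; rewrite -e alphaK eqxx in dn.
Qed.

Lemma step (S S' : {set D}) : edge_set alpha S ->
  (forall m, m \in M -> m \notin E -> (m \in S) = (m \in S')) ->
  forall x, x \notin M -> connect (curve_rel alpha rot M S) x (res S' x).
Proof.
move=> hS hSS x hx.
have c1 : curve_rel alpha rot M S x (res S x).
  by rewrite /curve_rel hx res_notM // eqxx orbT.
have hm := mx_M hx.
case: (boolP (mx x \in E)) => hE; last by rewrite -(res_dep (hSS _ hm hE)); exact: connect1.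
apply: (connect_trans (connect1 c1)).
apply: (good (m := alpha (mx x))) => //; rewrite ?res_notM ?res_vert //.
by move: hE; rewrite !inE; case/orP => /eqP ->; rewrite ?alphaK eqxx ?orbT.
Qed.

Lemma curve_sub (S S' : {set D}) : edge_set alpha S ->
  (forall m, m \in M -> m \notin E -> (m \in S) = (m \in S')) ->
  subrel (curve_rel alpha rot M S') (connect (curve_rel alpha rot M S)).
Proof.
move=> hS hSS x y /and3P [hx hy]; case/or3P => /eqP e.
- by apply: connect1; rewrite /curve_rel hx hy e eqxx.
- by rewrite e; apply: step.
- by rewrite (sym_connect_sym (@curve_sym S)) e; apply: step.
Qed.


Definition tog (S : {set D}) := (S :\: [set c0; alpha c0]) :|: ([set c0; alpha c0] :\: S).

Lemma togK S : tog (tog S) = S.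
Proof.
apply/setP => d; rewrite /tog !inE.
by case: (d \in S); case: (d == c0); case: (d == alpha c0).
Qed.

Lemma tog_mem S m : m \notin E -> (m \in tog S) = (m \in S).
Proof. by rewrite /tog !inE => /norP [/negbTE -> /negbTE ->]; rewrite /= andbF orbF. Qed.

Lemma aeq a b : (alpha a == b) = (a == alpha b).
Proof. by apply/eqP/eqP => [<-|->]; rewrite alphaK. Qed.

Lemma tog_state S : is_state alpha M S -> is_state alpha M (tog S).
Proof.
case/andP => sM eS; apply/andP; split.
  apply/subsetP => d; rewrite /tog !inE; case/orP => /andP [h1 h2].
    exact: (subsetP sM _ h2).
  case/orP: h2 => /eqP ->; first exact: c0M.
  by rewrite edgeP.
apply/forallP => d; rewrite /tog !inE !aeq alphaK edgeP //.
by case: (d \in S); case: (d == c0); case: (d == alpha c0).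
Qed.

Lemma tog_card S : is_state alpha M S ->
  (#|S| = #|tog S| + 2 \/ #|tog S| = #|S| + 2)%N.
Proof.
case/andP => _ eS.
have n2 : #|E| = 2%N by rewrite cards2 eq_sym alpha_neq.
case: (boolP (c0 \in S)) => h.
  have ES : E \subset S by apply/subsetP => d; rewrite !inE => /orP[/eqP->|/eqP->]; rewrite ?edgeP.
  left; have -> : tog S = S :\: E.
    apply/setP => d; rewrite /tog !inE; case: (boolP (d == c0)) => [/eqP->|]; first by rewrite h.
    case: (boolP (d == alpha c0)) => [/eqP->|] /=; first by rewrite edgeP // h.
    by rewrite andbF orbF.
  by rewrite -(cardsID E S) (setIidPr ES) n2 addnC.
right; have hn : alpha c0 \notin S by rewrite edgeP.
have -> : tog S = S :|: E.
  apply/setP => d; rewrite /tog !inE; case: (boolP (d == c0)) => [/eqP->|]; first by rewrite (negbTE h).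
  case: (boolP (d == alpha c0)) => [/eqP->|] /=; first by rewrite (negbTE hn).
  by move=> _ _; rewrite andbF !orbF.
rewrite cardsU n2.
suff -> : S :&: E = set0 by rewrite cards0 subn0.
apply/setP => d; rewrite !inE; case: (boolP (d == c0)) => [/eqP->|]; first by rewrite (negbTE h).
by case: (boolP (d == alpha c0)) => [/eqP->|]; rewrite ?(negbTE hn) ?andbF.
Qed.

Lemma tog_curves S : is_state alpha M S ->
  num_curves alpha rot M (tog S) = num_curves alpha rot M S.
Proof.
move=> hS; have hT := tog_state hS.
case/andP: hS => _ eS; case/andP: hT => _ eT.
rewrite /num_curves; apply: eq_n_comp => x y; apply/idP/idP; apply: connect_sub.
- apply: curve_sub => // m _ mE; by rewrite tog_mem.
- apply: curve_sub => // m _ mE; by rewrite tog_mem.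
Qed.

End Cut.


Lemma div2S2 n : ((n + 2) %/ 2 = (n %/ 2).+1)%N.
Proof. by rewrite divnDr ?dvdnn // divnn addn1. Qed.

Local Open Scope ring_scope.
Import GRing.Theory.

Lemma main_sec (A0 : {set V}) (c0 : D) :
  vert c0 \in A0 -> vert (alpha c0) \notin A0 ->
  (forall d, d != c0 -> vert d \in A0 -> vert (alpha d) \in A0) ->
  two_factor_poly alpha rot M (1 : rat) = 0 /\ num_2factors vert alpha M = 0%N.
Proof.
move=> c0A c0nA hcl.
have eT : edge_set alpha [set: D] by apply/forallP => d; rewrite !inE.
have oA : odd #|A0|.
  have := parity c0A c0nA hcl eT; rewrite (@card_deg _ _ 3) ?inE ?oddM //.
  by move=> v; rewrite -(tri v); apply: eq_card => d; rewrite !inE.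
have Mc0 : c0 \in M.
  by rewrite -(parity c0A c0nA hcl PMe) (@card_deg _ _ 1) // mul1n.
split; last first.
  apply/eqP; rewrite cards_eq0; apply/eqP/setP => F; rewrite !inE.
  apply/negbTE/negP => /andP [/andP [hF /forallP hdeg] hMF].
  have := parity c0A c0nA hcl hF; rewrite (@card_deg _ _ 2) => [|v]; last exact/eqP.
  by rewrite oddM /= (subsetP hMF _ Mc0).
rewrite /two_factor_poly.
set G := fun S : {set D} => (- (1 : rat)) ^+ (#|S| %/ 2) * (1 + 1^-1) ^+ num_curves alpha rot M S.
have H : \sum_(S | is_state alpha M S) G S = - \sum_(S | is_state alpha M S) G S.
  rewrite {1}(reindex_inj (can_inj (@togK c0))) -sumrN; apply: eq_big => S.
    apply/idP/idP => h; last exact: tog_state.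
    by rewrite -(togK c0 S); apply: tog_state.
  move=> hT; have hS : is_state alpha M S by rewrite -(togK c0 S); apply: tog_state.
  rewrite /G (tog_curves c0A c0nA hcl Mc0 hS).
  case: (tog_card c0 hS) => ->; rewrite div2S2 exprS mulN1r ?mulNr ?opprK //.
have K0 : forall x : rat, x = - x -> x = 0.
  move=> x hx; have : x + x = 0 by rewrite {1}hx addNr.
  by rewrite -mulr2n -mulr_natr => /eqP; rewrite mulf_eq0 /= => /orP [/eqP //|].
exact: K0 H.
Qed.

End P.

Unset Implicit Arguments.
Local Open Scope ring_scope.

Theorem lemma2p6 (V D : finType) (vert : D -> V) (alpha : D -> D)
    (rot : {perm D}) (M : {set D}) :
  dart_graph alpha ->
  trivalent vert ->
  connected_graph vert alpha ->
  spherical_embedding vert alpha rot ->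
  perfect_matching vert alpha M ->
  (exists d0 : D, is_bridge vert alpha d0) ->
  two_factor_poly alpha rot M (1 : rat) = 0 /\
  num_2factors vert alpha M = 0%N.
Proof.
move=> [alphaK alpha_neq] tri conn [[rot_vert rot_conn] _] [PMe PM1] [d0 Hbr].
have [u [w Hn]] : exists u w, ~~ connect (adj_minus vert alpha d0) u w.
  case: (boolP [exists u, exists w, ~~ connect (adj_minus vert alpha d0) u w]).
    by case/existsP => u /existsP [w h]; exists u, w.
  move/existsPn => H; exfalso; apply: Hbr => u w.
  by have /existsPn/(_ w) := H u; rewrite negbK.
pose A := [set x | connect (adj_minus vert alpha d0) u x].
have uA : u \in A by rewrite inE connect0.
have wA : w \notin A by rewrite inE.
have cross : forall c, vert c \in A -> vert (alpha c) \notin A -> (c == d0) || (c == alpha d0).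
  move=> c cA; apply: contraR => hc; rewrite inE; rewrite inE in cA.
  apply: (connect_trans cA); apply: connect1; apply/existsP; exists c.
  by rewrite negb_or in hc; case/andP: hc => -> ->; rewrite !eqxx.
case: (boolP [exists d, (vert d \in A) && (vert (alpha d) \notin A)]); last first.
  move/existsPn => H; exfalso; move/negP: wA; apply.
  apply: (connect_fwd (P := [pred x | x \in A]) _ (conn u w) uA).
  move=> a b /existsP [d /andP [/eqP da /eqP db]] aA.
  by have := H d; rewrite da (aA : a \in A) db /= negbK.
case/existsP => c0 /andP [c0A c0nA].
apply: (main_sec alphaK alpha_neq tri rot_vert rot_conn PMe PM1 c0A c0nA).
move=> d dn dA; apply/negPn/negP => dnA.
have := cross _ dA dnA; have := cross _ c0A c0nA.
case/orP => /eqP e1; case/orP => /eqP e2; subst.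
- by rewrite eqxx in dn.
- by rewrite alphaK c0A in dnA.
- by rewrite alphaK dA in c0nA.
- by rewrite eqxx in dn.
Qed.
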